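(* Let $\Re$ be a commutative Krasner hyperring with identity $1\ne0$, and let $\phi:L(\Re)\to L(\Re)\cup\{\emptyset\}$ be a function with $\phi\le\phi_3$. If $T$ is a proper $\phi$-prime hyperideal of $\Re$, then $T$ is a $w$-prime hyperideal.
   Context: Krasner hyperring: $(\Re,\oplus)$ canonical hypergroup, $(\Re,\circ)$ commutative semigroup with identity $1\ne0$, $0$ absorbing, distributive. Hyperideals and $L(\Re)$ as usual; $N^n$ is the $n$-th power of the hyperideal $N$ (product hyperideal generated by products). $\phi_3(N)=N^3$, $\phi_w(N)=\bigcap_{n\ge1}N^n$. For functions $\sigma_1,\sigma_2:L(\Re)\to L(\Re)\cup\{\emptyset\}$, $\sigma_1\le\sigma_2$ means $\sigma_1(N)\subseteq\sigma_2(N)$ for all $N$. A hyperideal $N$ is $\sigma$-prime if $a\circ b\in N$, $a\circ b\notin\sigma(N)$ imply $a\in N$ or $b\in N$; $w$-prime means $\phi_w$-prime. *)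

(* Defs.v *)
Definition hset (R : Type) := R -> Prop.
Definition hsubset {R : Type} (A B : hset R) : Prop := forall x, A x -> B x.

Record KrasnerHyperring := {
  carrier :> Type;
  hadd : carrier -> carrier -> hset carrier;
  hneg : carrier -> carrier;
  hzero : carrier;
  hmul : carrier -> carrier -> carrier;
  hone : carrier;
  (* (R, ⊕) is a canonical hypergroup *)
  hadd_nonempty : forall x y, exists z, hadd x y z;
  hadd_assoc : forall x y z w,
      (exists u, hadd x y u /\ hadd u z w) <-> (exists v, hadd y z v /\ hadd x v w);
  hadd_comm : forall x y w, hadd x y w <-> hadd y x w;
  hadd_zero : forall x w, hadd x hzero w <-> w = x;
  hneg_spec : forall x, hadd x (hneg x) hzero;
  hneg_unique : forall x y, hadd x y hzero -> y = hneg x;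
  hadd_reversible : forall x y z, hadd x y z -> hadd (hneg x) z y;
  hmul_assoc : forall x y z, hmul x (hmul y z) = hmul (hmul x y) z;
  hmul_comm : forall x y, hmul x y = hmul y x;
  hmul_one : forall x, hmul hone x = x;
  hone_neq_zero : hone <> hzero;
  hmul_zero : forall x, hmul hzero x = hzero;
  (* distributivity: a ∘ (x ⊕ y) = (a ∘ x) ⊕ (a ∘ y) *)
  hmul_distr : forall a x y w,
      (exists u, hadd x y u /\ w = hmul a u) <-> hadd (hmul a x) (hmul a y) w
}.

Arguments hadd {k}.
Arguments hneg {k}.
Arguments hzero {k}.
Arguments hmul {k}.
Arguments hone {k}.

Section Hyperideals.
Variable R : KrasnerHyperring.

Definition hyperideal (N : hset R) : Prop :=
  (exists x, N x) /\
  (forall a b, N a -> N b -> hsubset (hadd a (hneg b)) N) /\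
  (forall r a, N a -> N (hmul r a)).

Definition proper (N : hset R) : Prop := exists x, ~ N x.

Definition hideal_gen (S : hset R) : hset R :=
  fun x => forall J, hyperideal J -> hsubset S J -> J x.

Definition hprod (I J : hset R) : hset R :=
  hideal_gen (fun x => exists a b, I a /\ J b /\ x = hmul a b).

(** hpow_aux N m = N^(m+1) *)
Fixpoint hpow_aux (N : hset R) (m : nat) : hset R :=
  match m with
  | O => N
  | S m' => hprod (hpow_aux N m') N
  end.

(** N^n (for n >= 1; N^0 is the whole hyperring by convention). *)
Definition hpow (N : hset R) (n : nat) : hset R :=
  match n with
  | O => fun _ => True
  | S m => hpow_aux N m
  end.

Definition phi3 (N : hset R) : hset R := hpow N 3.
Definition phiw (N : hset R) : hset R := fun x => forall n, 1 <= n -> hpow N n x.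

(** sigma : L(R) -> L(R) ∪ {∅}, modelled on all subsets, constrained on hyperideals. *)
Definition hfun_ok (sigma : hset R -> hset R) : Prop :=
  forall N, hyperideal N -> hyperideal (sigma N) \/ (forall x, ~ sigma N x).

Definition hfun_le (s1 s2 : hset R -> hset R) : Prop :=
  forall N, hyperideal N -> hsubset (s1 N) (s2 N).

Definition sigma_prime (sigma : hset R -> hset R) (N : hset R) : Prop :=
  hyperideal N /\
  forall a b, N (hmul a b) -> ~ sigma N (hmul a b) -> N a \/ N b.

Definition w_prime (N : hset R) : Prop := sigma_prime phiw N.

End Hyperideals.

(* Main.v *)
Require Import Defs.
From Stdlib Require Import Classical.

Section L.
Variable R : KrasnerHyperring.

Lemma negneg (y : R) : hneg (hneg y) = y.
Proof. symmetry. apply hneg_unique. apply hadd_comm. apply hneg_spec. Qed.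

Lemma id_zero (J : hset R) : hyperideal R J -> J hzero.
Proof. intros [[x Hx] [Hc _]]. exact (Hc x x Hx Hx _ (hneg_spec R x)). Qed.

Lemma id_neg (J : hset R) x : hyperideal R J -> J x -> J (hneg x).
Proof. intros HJ Hx. destruct HJ as [H1 [Hc H3]].
  apply (Hc hzero x (id_zero J (conj H1 (conj Hc H3))) Hx).
  apply hadd_comm. apply hadd_zero. reflexivity. Qed.

Lemma id_add (J : hset R) x y z : hyperideal R J -> J x -> J y -> hadd x y z -> J z.
Proof. intros HJ Hx Hy Hz. pose proof (id_neg J y HJ Hy) as Hn.
  destruct HJ as [_ [Hc _]]. apply (Hc x (hneg y) Hx Hn). rewrite negneg. exact Hz. Qed.

Lemma id_sub (J : hset R) x y z : hyperideal R J -> J x -> J z -> hadd x y z -> J y.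
Proof. intros HJ Hx Hz H. apply hadd_reversible in H.
  apply (id_add J (hneg x) z y HJ (id_neg J x HJ Hx) Hz H). Qed.

Lemma id_mul (J : hset R) r x : hyperideal R J -> J x -> J (hmul r x).
Proof. intros [_ [_ H]]. apply H. Qed.

Lemma gen_min (S J : hset R) : hyperideal R J -> hsubset S J -> hsubset (hideal_gen R S) J.
Proof. intros HJ HS x Hx. apply Hx; assumption. Qed.

Lemma gen_ideal (S : hset R) : hyperideal R (hideal_gen R S).
Proof. split; [|split].
  - exists hzero. intros J HJ _. apply id_zero; auto.
  - intros a b Ha Hb z Hz J HJ HS. destruct HJ as [H1 [Hc H3]].
    apply (Hc a b); [apply Ha|apply Hb|]; auto; split; auto.
  - intros r a Ha J HJ HS. apply id_mul; auto; apply Ha; auto.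
Qed.

Lemma gen_mono (S S' : hset R) : hsubset S S' -> hsubset (hideal_gen R S) (hideal_gen R S').
Proof. intros H x Hx J HJ HS. apply Hx; auto. intros y Hy; auto. Qed.

Variable I P : hset R.
Hypothesis HI : hyperideal R I.
Hypothesis HP : hyperideal R P.
Hypothesis Hpr : forall a b, I (hmul a b) -> ~ P (hmul a b) -> I a \/ I b.

Lemma stepA a b : ~ I a -> ~ I b -> I (hmul a b) -> P (hmul a b) -> forall x, I x -> P (hmul a x).
Proof.
  intros Ha Hb HIab Hab x Hx. destruct (hadd_nonempty R b x) as [y Hy].
  assert (Hyn : ~ I y).
  { intro HyI. apply Hb. apply (id_sub I x b y HI Hx HyI). apply hadd_comm; auto. }
  assert (Hay : hadd (hmul a b) (hmul a x) (hmul a y)).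
  { apply hmul_distr. exists y; auto. }
  assert (HIay : I (hmul a y)).
  { apply (id_add I _ _ _ HI HIab (id_mul I a x HI Hx) Hay). }
  assert (HPay : P (hmul a y)).
  { apply NNPP. intro N. destruct (Hpr a y HIay N); contradiction. }
  exact (id_sub P _ _ _ HP Hab HPay Hay).
Qed.

Lemma stepB a b : ~ I a -> ~ I b -> I (hmul a b) -> P (hmul a b) -> hsubset (hprod R I I) P.
Proof.
  intros Ha Hb HIab Hab. apply gen_min; auto.
  intros z [x [y [Hx [Hy ->]]]].
  destruct (hadd_nonempty R a x) as [u Hu].
  assert (Hun : ~ I u).
  { intro HuI. apply Ha. apply (id_sub I x a u HI Hx HuI). apply hadd_comm; auto. }
  assert (Hba : hmul b a = hmul a b) by apply hmul_comm.
  assert (Hbu : hadd (hmul b a) (hmul b x) (hmul b u)).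
  { apply hmul_distr. exists u; auto. }
  assert (HPbx : P (hmul b x)).
  { apply (stepA b a); auto; rewrite Hba; auto. }
  assert (HPbu : P (hmul b u)).
  { apply (id_add P _ _ _ HP (eq_ind _ P Hab _ (eq_sym Hba)) HPbx Hbu). }
  assert (HIbu : I (hmul b u)).
  { apply (id_add I _ _ _ HI (eq_ind _ I HIab _ (eq_sym Hba)) (id_mul I b x HI Hx) Hbu). }
  rewrite hmul_comm in HPbu, HIbu.
  assert (HPuy : P (hmul u y)) by (apply (stepA u b); auto).
  assert (Hyu : hadd (hmul y a) (hmul y x) (hmul y u)).
  { apply hmul_distr. exists u; auto. }
  assert (HPya : P (hmul y a)).
  { rewrite hmul_comm. apply (stepA a b); auto. }
  rewrite hmul_comm in HPuy.
  rewrite hmul_comm. exact (id_sub P _ _ _ HP HPya HPuy Hyu).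
Qed.
End L.

Theorem mainTheorem7 (R : KrasnerHyperring) (phi : hset R -> hset R)
  (Hphi : hfun_ok R phi) (Hle : hfun_le R phi (phi3 R))
  (T : hset R) (HT : proper R T) (Hprime : sigma_prime R phi T) :
  w_prime R T.
Proof.
  destruct Hprime as [HI Hpr]. split; auto.
  intros a b Hab Hw.
  destruct (classic (phi T (hmul a b))) as [HPab|HnP]; [|apply Hpr; auto].
  destruct (classic (T a)) as [|Ha]; auto.
  destruct (classic (T b)) as [|Hb]; auto.
  exfalso. apply Hw.
  assert (HP : hyperideal R (phi T)).
  { destruct (Hphi T HI) as [H|H]; auto. exfalso; exact (H _ HPab). }
  assert (H2 : hsubset (hprod R T T) (phi T)) by (apply (stepB R T (phi T)) with a b; auto).
  assert (H3 : hsubset (hpow_aux R T 2) (hpow_aux R T 1)).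
  { apply gen_min. apply gen_ideal. intros z [p [q [Hp [Hq ->]]]].
    rewrite hmul_comm. apply id_mul; auto. apply gen_ideal. }
  assert (H23 : hsubset (hpow_aux R T 1) (hpow_aux R T 2)).
  { intros z Hz. apply (Hle T HI). apply H2. exact Hz. }
  assert (Hall : forall m, hsubset (hpow_aux R T 1) (hpow_aux R T (S m))).
  { induction m as [|m IH]. - intros z Hz; exact Hz.
    - intros z Hz. apply H23 in Hz. simpl in Hz |- *.
      apply (gen_mono R _ _ (fun w Hw' => match Hw' with ex_intro _ p (ex_intro _ q (conj Hp Hq)) =>
        ex_intro _ p (ex_intro _ q (conj (IH p Hp) Hq)) end)). exact Hz. }
  intros n Hn. destruct n as [|[|m]]; [inversion Hn| exact Hab |].
  simpl. apply (Hall m). apply H3. apply (Hle T HI). exact HPab.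
Qed.
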